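(* Let $\mathcal{X},\mathcal{Y}$ be real Hilbert spaces, $a:\mathcal{X}\times\mathcal{Y}\to\mathbb{R}$ bilinear with $|a(w,v)|\le C_a\|w\|_\mathcal{X}\|v\|_\mathcal{Y}$, $f\in\mathcal{Y}^\star$, and $u\in\mathcal{X}$ with $a(u,v)=f(v)$ for all $v\in\mathcal{Y}$. Let $\ell,N\in\mathbb{N}$ and let $\mathcal{X}_\ell\subseteq\mathcal{X}_{\ell+1}\subseteq\dots\subseteq\mathcal{X}_{\ell+N+1}\subseteq\mathcal{X}$ and $\mathcal{Y}_\ell\subseteq\dots\subseteq\mathcal{Y}_{\ell+N+1}\subseteq\mathcal{Y}$ be finite-dimensional subspaces with $\dim\mathcal{X}_{\ell+k}=\dim\mathcal{Y}_{\ell+k}$ and $\inf_{w\in\mathcal{X}_{\ell+k}}\sup_{v\in\mathcal{Y}_{\ell+k}}\frac{a(w,v)}{\|w\|_\mathcal{X}\|v\|_\mathcal{Y}}\ge\gamma>0$ for $k=0,\dots,N+1$, and let $u_{\ell+k}\in\mathcal{X}_{\ell+k}$ be the unique solutions of $a(u_{\ell+k},v)=f(v)$ for all $v\in\mathcal{Y}_{\ell+k}$. Let $M$ be the block matrix associated with these spaces as in the context. If $M$ has a normalized block-$LU$-factorization $M=LU$, then $$\sum_{k=\ell}^{\ell+N}\|u_{k+1}-u_k\|_\mathcal{X}^2\le\frac{C_a^2}{\gamma^2}\,\|U\|_2^2\max_{k=1,\dots,N+1}\|U^{-1}(:,k)\|_2^2\,\|u-u_\ell\|_\mathcal{X}^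2.$$
   Context: Nested orthonormal basis: let $\mathcal{B}_0^\mathcal{X}$ be an $\mathcal{X}$-orthonormal basis of $\mathcal{X}_\ell$ and, for $j=1,\dots,N+1$, $\mathcal{B}_j^\mathcal{X}$ an $\mathcal{X}$-orthonormal basis of $\{v\in\mathcal{X}_{\ell+j}: v\perp_\mathcal{X}\mathcal{X}_{\ell+j-1}\}$; analogously $\mathcal{B}_j^\mathcal{Y}$ with respect to $\mathcal{Y}$. Enumerate $\bigcup_j\mathcal{B}^\mathcal{X}_j=\{w_1^\mathcal{X},\dots,w_{\rm dim}^\mathcal{X}\}$ (${\rm dim}=\dim\mathcal{X}_{\ell+N+1}$) so that functions of $\mathcal{B}_j^\mathcal{X}$ precede those of $\mathcal{B}_{j+1}^\mathcal{X}$, and likewise $w_r^\mathcal{Y}$. Block structure: $n_0=0$, $n_{j+1}:=\dim\mathcal{X}_{\ell+j}$, $j=0,\dots,N+1$. $M\in\mathbb{R}^{{\rm dim}\times{\rm dim}}$, $M_{rt}:=a(w_t^\mathcal{X},w_r^\mathcal{Y})$. For a block matrix, block $(i,j)$ (indices from $0$) consists of rows $n_i+1,\dots,n_{i+1}$ and columns $n_j+1,\dots,n_{j+1}$; $M(:,j)$ denotes the $j$-th block column. A normalized block-$LU$-factorization is $M=LU$ with $L$ block lower triangular with identity diagonal blocks and $U$ block upper triangular. $\|\cdot\|_2$ is the spectral norm. *)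

(* Defs.v *)
From HB Require Import structures.
From mathcomp Require Import all_boot all_order all_algebra.
From mathcomp Require Import all_classical all_reals.
Set Implicit Arguments. Unset Strict Implicit. Unset Printing Implicit Defensive.
Import Order.TTheory GRing.Theory Num.Theory.
Local Open Scope ring_scope.
Local Open Scope classical_set_scope.

Definition inner_product (R : realType) (X : lmodType R) (ip : X -> X -> R) :=
  [/\ forall x y, ip x y = ip y x,
      forall c x y z, ip (c *: x + y) z = c * ip x z + ip y z,
      forall x, 0 <= ip x x &
      forall x, ip x x = 0 -> x = 0].

Definition ipnorm (R : realType) (X : lmodType R) (ip : X -> X -> R) (x : X) : R :=
  Num.sqrt (ip x x).

Definition ip_complete (R : realType) (X : lmodType R) (ip : X -> X -> R) :=
  forall s : nat -> X,
    (forall e : R, 0 < e -> exists M : nat, forall m n, (M <= m)%N -> (M <= n)%N ->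
        ipnorm ip (s m - s n) < e) ->
    exists l : X, forall e : R, 0 < e -> exists M : nat, forall n, (M <= n)%N ->
        ipnorm ip (s n - l) < e.

Definition hilbert (R : realType) (X : lmodType R) (ip : X -> X -> R) :=
  inner_product ip /\ ip_complete ip.

Definition subspace (R : realType) (X : lmodType R) (S : set X) :=
  S 0 /\ forall (c : R) x y, S x -> S y -> S (c *: x + y).

Definition span_of (R : realType) (X : lmodType R) (n : nat) (b : 'I_n -> X) : set X :=
  [set x | exists c : 'I_n -> R, x = \sum_(i < n) c i *: b i].

Definition lin_indep (R : realType) (X : lmodType R) (n : nat) (b : 'I_n -> X) :=
  forall c : 'I_n -> R, \sum_(i < n) c i *: b i = 0 -> forall i, c i = 0.

Definition has_dim (R : realType) (X : lmodType R) (S : set X) (n : nat) :=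
  subspace S /\ exists b : 'I_n -> X, lin_indep b /\ span_of b = S.

Definition infsup_ge (R : realType) (X Y : lmodType R)
  (ipX : X -> X -> R) (ipY : Y -> Y -> R) (a : X -> Y -> R)
  (Xk : set X) (Yk : set Y) (g : R) :=
  forall w, Xk w -> w != 0 ->
    g <= sup [set a w v / (ipnorm ipX w * ipnorm ipY v) | v in [set v | Yk v /\ v != 0]].

(* d k = dim X_{l+k};  n_0 = 0, n_{j+1} = d j *)
Definition blk_start (d : nat -> nat) (j : nat) : nat :=
  if j is j'.+1 then d j' else 0%N.

(* index r (0-based) belongs to block j: n_j <= r < n_{j+1} *)
Definition in_block (d : nat -> nat) (j r : nat) : bool :=
  (blk_start d j <= r < blk_start d j.+1)%N.

Definition orth_part (R : realType) (X : lmodType R) (ip : X -> X -> R)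
  (Xs : nat -> set X) (l j : nat) : set X :=
  if j is j'.+1 then [set v | Xs (l + j)%N v /\ forall x, Xs (l + j')%N x -> ip v x = 0]
  else Xs l.

(* w enumerates the union of the orthonormal bases B_0, ..., B_{N+1}, block by block:
   the entries with index in block j form an orthonormal basis of orth_part j. *)
Definition nested_onb (R : realType) (X : lmodType R) (ip : X -> X -> R)
  (Xs : nat -> set X) (l N : nat) (d : nat -> nat) (w : 'I_(d N.+1) -> X) :=
  forall j, (j <= N.+1)%N ->
    (forall r s : 'I_(d N.+1), in_block d j r -> in_block d j s ->
        ip (w r) (w s) = (r == s)%:R) /\
    orth_part ip Xs l j =
      [set x | exists c : 'I_(d N.+1) -> R,
                 (forall r : 'I_(d N.+1), ~~ in_block d j r -> c r = 0) /\
                 x = \sum_(r < d N.+1) c r *: w r].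

Definition galerkin_matrix (R : realType) (X Y : lmodType R) (a : X -> Y -> R)
  (n : nat) (wX : 'I_n -> X) (wY : 'I_n -> Y) : 'M[R]_n :=
  \matrix_(r < n, t < n) a (wX t) (wY r).

Definition block_lower_unit (R : realType) (d : nat -> nat) (N : nat) (L : 'M[R]_(d N.+1)) :=
  forall (i j : nat) (r t : 'I_(d N.+1)), (i <= N.+1)%N -> (j <= N.+1)%N ->
    in_block d i r -> in_block d j t ->
    ((i < j)%N -> L r t = 0) /\ (i = j -> L r t = (r == t)%:R).

Definition block_upper (R : realType) (d : nat -> nat) (N : nat) (U : 'M[R]_(d N.+1)) :=
  forall (i j : nat) (r t : 'I_(d N.+1)), (i <= N.+1)%N -> (j <= N.+1)%N ->
    in_block d i r -> in_block d j t -> (j < i)%N -> U r t = 0.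

Definition vnorm (R : realType) (n : nat) (x : 'cV[R]_n) : R :=
  Num.sqrt (\sum_(i < n) x i 0 ^+ 2).

Definition specnorm (R : realType) (m n : nat) (A : 'M[R]_(m, n)) : R :=
  sup [set vnorm (A *m x) | x in [set x : 'cV[R]_n | vnorm x <= 1]].

(* the k-th block column A(:,k): columns n_k+1 .. n_{k+1} (1-based) *)
Definition block_col (R : realType) (d : nat -> nat) (m n : nat) (A : 'M[R]_(m, n)) (k : nat)
  : 'M[R]_(m, blk_start d k.+1 - blk_start d k) :=
  \matrix_(r < m, j < blk_start d k.+1 - blk_start d k)
    match [pick t : 'I_n | val t == (blk_start d k + j)%N] with
    | Some t => A r t
    | None => 0
    end.

Arguments nested_onb {R X} ip Xs l N d w.
Arguments block_lower_unit {R} d N L.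
Arguments block_upper {R} d N U.
Arguments block_col {R} d {m n} A k.

(* Main.v *)
Require Import Defs.
From HB Require Import structures.
From mathcomp Require Import all_boot all_order all_algebra.
From mathcomp Require Import all_classical all_reals.
From mathcomp Require Import ring lra zify.
Import Order.TTheory GRing.Theory Num.Theory.
Local Open Scope ring_scope.
Local Open Scope classical_set_scope.

Set Implicit Arguments. Unset Strict Implicit. Unset Printing Implicit Defensive.


Section Lin.
Variables (R : realType) (X : lmodType R) (h : X -> R).
Hypothesis Hh : forall (c : R) x y, h (c *: x + y) = c * h x + h y.

Lemma lin0 : h 0 = 0.
Proof.
have := Hh 1 0 0; rewrite scale1r addr0 mul1r => H; lra.
Qed.

Lemma linD x y : h (x + y) = h x + h y.
Proof. by rewrite -[x]scale1r Hh mul1r scale1r. Qed.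

Lemma linZ c x : h (c *: x) = c * h x.
Proof. by rewrite -[c *: x]addr0 Hh lin0 addr0. Qed.

Lemma linN x : h (- x) = - h x.
Proof. by rewrite -scaleN1r linZ mulN1r. Qed.

Lemma linB x y : h (x - y) = h x - h y.
Proof. by rewrite linD linN. Qed.

Lemma lin_sum (I : finType) (c : I -> R) (w : I -> X) :
  h (\sum_i c i *: w i) = \sum_i c i * h (w i).
Proof.
rewrite (big_morph h linD lin0); apply: eq_bigr => i _; exact: linZ.
Qed.
End Lin.

Section IP.
Variables (R : realType) (X : lmodType R) (ip : X -> X -> R).
Hypothesis Hip : inner_product ip.

Lemma ipC x y : ip x y = ip y x.
Proof. by case: Hip. Qed.

Lemma ipl z : forall (c : R) x y, ip (c *: x + y) z = c * ip x z + ip y z.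
Proof. by move=> c x y; case: Hip => _ H _ _; apply: H. Qed.

Lemma ipr z : forall (c : R) x y, ip z (c *: x + y) = c * ip z x + ip z y.
Proof. by move=> c x y; rewrite !(ipC z) ipl. Qed.

Lemma ip_ge0 x : 0 <= ip x x.
Proof. by case: Hip. Qed.

Lemma ip_eq0 x : ip x x = 0 -> x = 0.
Proof. by case: Hip => _ _ _; apply. Qed.

Lemma ipnorm_sq x : ipnorm ip x ^+ 2 = ip x x.
Proof. by rewrite /ipnorm sqr_sqrtr // ip_ge0. Qed.

Lemma ipnorm_ge0 x : 0 <= ipnorm ip x.
Proof. exact: sqrtr_ge0. Qed.

Lemma ipnorm0 : ipnorm ip 0 = 0.
Proof. by rewrite /ipnorm (lin0 (ipl 0)) sqrtr0. Qed.

Lemma ipnorm_gt0 x : x != 0 -> 0 < ipnorm ip x.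
Proof.
move=> nx; rewrite lt_neqAle ipnorm_ge0 andbT eq_sym.
apply/negP; rewrite sqrtr_eq0 => H; apply/negP: nx; rewrite negbK.
by apply/eqP/ip_eq0/eqP; rewrite eq_le H ip_ge0.
Qed.
End IP.

Section Sub.
Variables (R : realType) (X : lmodType R) (S : set X).
Hypothesis HS : subspace S.

Lemma sub0 : S 0. Proof. by case: HS. Qed.
Lemma subZD c x y : S x -> S y -> S (c *: x + y). Proof. by case: HS => _; apply. Qed.
Lemma subD x y : S x -> S y -> S (x + y).
Proof. by move=> ? ?; rewrite -[x]scale1r; apply: subZD. Qed.
Lemma subZ c x : S x -> S (c *: x).
Proof. by move=> ?; rewrite -[_ *: _]addr0; apply: subZD => //; apply: sub0. Qed.
Lemma subB x y : S x -> S y -> S (x - y).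
Proof. by move=> ? ?; rewrite -scaleN1r; apply: subD => //; apply: subZ. Qed.
Lemma sub_sum (I : finType) (c : I -> R) (w : I -> X) :
  (forall i, c i = 0 \/ S (w i)) -> S (\sum_i c i *: w i).
Proof.
move=> Hw; apply: (big_ind S); [exact: sub0 | exact: subD | move=> i _].
by case: (Hw i) => [->|?]; [rewrite scale0r; apply: sub0 | apply: subZ].
Qed.
End Sub.

Lemma dim_le (R : realType) (X : lmodType R) (S T : set X) m n :
  S `<=` T -> has_dim S m -> has_dim T n -> (m <= n)%N.
Proof.
move=> ST [_ [b [bi bs]]] [_ [b' [bi' bs']]].
have : forall i, exists c : 'I_n -> R, b i = \sum_(j < n) c j *: b' j.
  move=> i; have : T (b i) by apply: ST; rewrite -bs; exists (fun j => (j == i)%:R);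
    rewrite (bigD1 i) //= eqxx scale1r big1 ?addr0 // => j /negbTE ->; rewrite scale0r.
  by rewrite -bs' => -[c ->]; exists c.
case/choice => C HC.
pose A : 'M[R]_(m, n) := \matrix_(i, j) C i j.
have : row_free A.
  apply: inj_row_free => v Hv; apply/rowP => i; rewrite mxE.
  apply: (bi (fun i => v 0 i)).
  transitivity (\sum_(j < n) (v *m A) 0 j *: b' j); last first.
    by rewrite Hv big1 // => j _; rewrite mxE scale0r.
  under eq_bigr => i' _ do rewrite HC scaler_sumr.
  rewrite exchange_big /=; apply: eq_bigr => j _; rewrite mxE scaler_suml.
  by apply: eq_bigr => i' _; rewrite mxE scalerA.
rewrite /row_free => /eqP <-; exact: rank_leq_col.
Qed.


Section Basis.
Variables (R : realType) (X : lmodType R) (ip : X -> X -> R).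
Hypothesis Hip : inner_product ip.
Variables (Xs : nat -> set X) (l N : nat) (d : nat -> nat) (w : 'I_(d N.+1) -> X).
Hypothesis Hdim : forall k, (k <= N.+1)%N -> has_dim (Xs (l + k)%N) (d k).
Hypothesis Hnest : forall k, (k <= N)%N -> Xs (l + k)%N `<=` Xs (l + k.+1)%N.
Hypothesis Hw : nested_onb ip Xs l N d w.

Lemma subk k : (k <= N.+1)%N -> subspace (Xs (l + k)%N).
Proof. by move=> /Hdim []. Qed.

Lemma nest_le i j : (i <= j)%N -> (j <= N.+1)%N -> Xs (l + i)%N `<=` Xs (l + j)%N.
Proof.
elim: j => [|j IH]; first by rewrite leqn0 => /eqP -> _ x.
rewrite leq_eqVlt => /orP [/eqP -> _ x //|]; rewrite ltnS => ij jN.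
move=> x Hx; exact: (Hnest jN (IH ij (ltnW jN) x Hx)).
Qed.

Lemma dmono i j : (i <= j)%N -> (j <= N.+1)%N -> (d i <= d j)%N.
Proof.
move=> ij jN; apply: (dim_le (nest_le ij jN)); apply: Hdim => //.
exact: leq_trans jN.
Qed.

Lemma blk_ex (r : 'I_(d N.+1)) : exists2 j, (j <= N.+1)%N & in_block d j r.
Proof.
suff : forall m, (m <= N.+1)%N -> (r < d m)%N -> exists2 j, (j <= m)%N & in_block d j r.
  by move=> /(_ N.+1 (leqnn _) (ltn_ord r)) [j jm H]; exists j.
elim => [|m IH] mN rm; first by exists 0%N => //; rewrite /in_block /= rm.
case: (ltnP r (d m)) => rdm.
  by case: (IH (ltnW mN) rdm) => j jm H; exists j => //; exact: leqW.
by exists m.+1 => //; rewrite /in_block /= rdm.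
Qed.

Lemma blk_le j k (r : nat) : (j <= N.+1)%N -> (k <= N.+1)%N -> in_block d j r ->
  (r < d k)%N -> (j <= k)%N.
Proof.
move=> jN kN; rewrite /in_block; case: j jN => [//|j] jN /andP [/= Hr _] rk.
rewrite leqNgt; apply/negP => kj.
have := dmono (kj : (k <= j)%N) (ltnW jN); lia.
Qed.

Lemma blk_gt j k (r : nat) : (j <= N.+1)%N -> (k <= N.+1)%N -> in_block d j r ->
  (d k <= r)%N -> (k < j)%N.
Proof.
move=> jN kN; rewrite /in_block => /andP [_ /= Hr] kr.
rewrite ltnNge; apply/negP => jk.
have := dmono jk kN; lia.
Qed.

Lemma w_orth j (r : 'I_(d N.+1)) : (j <= N.+1)%N -> in_block d j r -> orth_part ip Xs l j (w r).
Proof.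
move=> jN br; have [_ ->] := Hw jN; exists (fun s => (s == r)%:R); split.
  by move=> s; case: eqP => // -> ; rewrite br.
by rewrite (bigD1 r) //= eqxx scale1r big1 ?addr0 // => s /negbTE ->; rewrite scale0r.
Qed.

Lemma w_in j (r : 'I_(d N.+1)) : (j <= N.+1)%N -> in_block d j r -> Xs (l + j)%N (w r).
Proof.
move=> jN br; have := w_orth jN br; case: j jN br => [|j] jN br /=.
  by rewrite addn0.
by case.
Qed.

Lemma w_in_k k (r : 'I_(d N.+1)) : (k <= N.+1)%N -> (r < d k)%N -> Xs (l + k)%N (w r).
Proof.
move=> kN rk; have [j jN br] := blk_ex r.
apply: (nest_le (blk_le jN kN br rk) kN); exact: w_in.
Qed.

Lemma orth_lt i j (r s : 'I_(d N.+1)) : (i < j)%N -> (j <= N.+1)%N ->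
  in_block d i r -> in_block d j s -> ip (w r) (w s) = 0 /\ r != s.
Proof.
move=> ij jN bi bj; split.
  rewrite ipC //; have := w_orth jN bj; case: j ij jN bj => [//|j] ij jN bj [_]; apply.
  apply: (nest_le (ij : (i <= j)%N) (ltnW jN)); apply: w_in => //; lia.
apply/eqP => rs; subst s.
have : (j <= i)%N; last by lia.
apply: blk_le bj _ => //; first exact: ltnW (leq_trans ij jN).
by move: bi; rewrite /in_block => /andP [].
Qed.

Lemma orthonormal (r s : 'I_(d N.+1)) : ip (w r) (w s) = (r == s)%:R.
Proof.
have [i iN bi] := blk_ex r; have [j jN bj] := blk_ex s.
case: (ltngtP i j) => [ij|ji|eij].
- by have [-> /negbTE ->] := orth_lt ij jN bi bj.
- have [H /negbTE rs] := orth_lt ji iN bj bi.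
  by rewrite ipC // H eq_sym rs.
- by subst j; have [H _] := Hw iN; apply: H.
Qed.

Lemma coef_rep (c : 'I_(d N.+1) -> R) r : ip (\sum_s c s *: w s) (w r) = c r.
Proof.
rewrite (lin_sum (ipl Hip (w r))).
rewrite (bigD1 r) //= orthonormal eqxx mulr1 big1 ?addr0 // => s /negbTE sr.
by rewrite orthonormal sr mulr0.
Qed.

Lemma sqnormE (c : 'I_(d N.+1) -> R) :
  ip (\sum_s c s *: w s) (\sum_s c s *: w s) = \sum_s c s ^+ 2.
Proof.
rewrite (lin_sum (ipr Hip _)); apply: eq_bigr => s _; rewrite coef_rep.
by rewrite expr2.
Qed.

Lemma repr_if k (c : 'I_(d N.+1) -> R) x :
  (forall r : 'I_(d N.+1), (d k <= r)%N -> c r = 0) -> x = \sum_s c s *: w s ->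
  x = \sum_(r < d N.+1) (if (r < d k)%N then ip x (w r) else 0) *: w r.
Proof.
move=> Hc xE; rewrite {1}xE; apply: eq_bigr => r _; congr (_ *: _).
rewrite xE coef_rep; case: ltnP => // /Hc -> //.
Qed.

Lemma span_rep k x : (k <= N.+1)%N -> Xs (l + k)%N x ->
  x = \sum_(r < d N.+1) (if (r < d k)%N then ip x (w r) else 0) *: w r.
Proof.
elim: k x => [|k IH] x kN.
  rewrite addn0 => Hx.
  have [_ E] := Hw (leq0n N.+1); have : orth_part ip Xs l 0 x by [].
  rewrite E => -[c [Hc xE]]; apply: (repr_if _ xE) => r rd; apply: Hc.
  by rewrite /in_block /= ltnNge rd.
move=> Hx.
pose p := \sum_(r < d N.+1) (if (r < d k)%N then ip x (w r) else 0) *: w r.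
have kN' : (k <= N.+1)%N by exact: ltnW.
have Hp : Xs (l + k.+1)%N p.
  apply: sub_sum; first exact: subk.
  move=> r; case: ifP => rk; [right | by left].
  apply: (nest_le (leqnSn k) kN); exact: w_in_k.
have Hy : orth_part ip Xs l k.+1 (x - p).
  split; first by apply: subB => //; exact: subk.
  move=> z /(IH z kN') ->.
  rewrite (lin_sum (ipr Hip _)) big1 // => s _.
  case: ifP => sk; last by rewrite mul0r.
  by rewrite (linB (ipl Hip (w s))) coef_rep sk subrr mulr0.
have [_ E] := Hw kN; move: Hy; rewrite E => -[c [Hc yE]].
have xE : x = \sum_(r < d N.+1) ((if (r < d k)%N then ip x (w r) else 0) + c r) *: w r.
  under eq_bigr do rewrite scalerDl.
  by rewrite big_split /= -yE /p addrC subrK.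
apply: (repr_if _ xE) => r rd; rewrite Hc.
  case: ifP => rk; last by rewrite addr0. exfalso; have := dmono (leqnSn k) kN; move: rd rk; clear; lia.
by rewrite /in_block /= negb_and -leqNgt rd orbT.
Qed.
End Basis.


Section Norms.
Variable R : realType.

Lemma sqsum_ge0 n (x : 'cV[R]_n) : 0 <= \sum_i x i 0 ^+ 2.
Proof. by apply: sumr_ge0 => i _; rewrite sqr_ge0. Qed.

Lemma vnorm_sq n (x : 'cV[R]_n) : vnorm x ^+ 2 = \sum_i x i 0 ^+ 2.
Proof. by rewrite /vnorm sqr_sqrtr // sqsum_ge0. Qed.

Lemma vnorm_ge0 n (x : 'cV[R]_n) : 0 <= vnorm x.
Proof. exact: sqrtr_ge0. Qed.

Lemma vnormZ n c (x : 'cV[R]_n) : vnorm (c *: x) = `|c| * vnorm x.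
Proof.
rewrite /vnorm; under eq_bigr do rewrite mxE exprMn.
by rewrite -mulr_sumr sqrtrM ?sqr_ge0 // sqrtr_sqr.
Qed.

Lemma vnorm_eq0 n (x : 'cV[R]_n) : vnorm x = 0 -> x = 0.
Proof.
move=> /eqP; rewrite sqrtr_eq0 => H.
have H0 : \sum_i x i 0 ^+ 2 = 0 by apply/eqP; rewrite eq_le H sqsum_ge0.
apply/matrixP => i j; rewrite ord1 mxE.
have := psumr_eq0P (fun i _ => sqr_ge0 (x i 0)) H0 (i := i) isT.
by move/eqP; rewrite sqrf_eq0 => /eqP.
Qed.

Lemma coord_le n (x : 'cV[R]_n) j : x j 0 ^+ 2 <= vnorm x ^+ 2.
Proof.
rewrite vnorm_sq (bigD1 j) //= lerDl; apply: sumr_ge0 => i _; exact: sqr_ge0.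
Qed.

Definition specset m n (A : 'M[R]_(m, n)) :=
  [set vnorm (A *m x) | x in [set x : 'cV[R]_n | vnorm x <= 1]].

Lemma spec_ub m n (A : 'M[R]_(m, n)) : has_ubound (specset A).
Proof.
exists (Num.sqrt (\sum_i (\sum_j `|A i j|) ^+ 2)) => _ [x /= Hx <-].
rewrite /vnorm ler_sqrt; last by apply: sumr_ge0 => i _; exact: sqr_ge0.
apply: ler_sum => i _.
have Hxj : forall j, `|x j 0| <= 1.
  move=> j; have := coord_le x j; have := vnorm_ge0 x.
  rewrite ler_norml => ? ?; apply/andP; split; nra.
have : `|(A *m x) i 0| <= \sum_j `|A i j|.
  rewrite mxE; apply: le_trans (ler_norm_sum _ _ _) _.
  apply: ler_sum => j _; rewrite normrM; apply: ler_piMr => //; exact: Hxj.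
rewrite ler_norml => /andP [? ?]; nra.
Qed.

Lemma specnorm_ge0 m n (A : 'M[R]_(m, n)) : 0 <= specnorm A.
Proof.
apply: le_trans (ub_le_sup (spec_ub A) _); first exact: (vnorm_ge0 (A *m 0)).
exists 0 => //=; rewrite /vnorm big1 ?sqrtr0 ?ler01 // => i _; by rewrite mxE expr2 mulr0.
Qed.

Lemma spec_bound m n (A : 'M[R]_(m, n)) x : vnorm (A *m x) <= specnorm A * vnorm x.
Proof.
have [x0|xn0] := eqVneq (vnorm x) 0.
  rewrite x0 mulr0 (vnorm_eq0 x0) mulmx0.
  by rewrite /vnorm big1 ?sqrtr0 // => i _; by rewrite mxE expr2 mulr0.
have xp : 0 < vnorm x by rewrite lt_neqAle eq_sym xn0 vnorm_ge0.
have : vnorm (A *m ((vnorm x)^-1 *: x)) <= specnorm A.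
  apply: ub_le_sup; first exact: spec_ub.
  exists ((vnorm x)^-1 *: x) => //=.
  by rewrite vnormZ ger0_norm ?invr_ge0 ?vnorm_ge0 // mulVf.
rewrite -scalemxAr vnormZ ger0_norm ?invr_ge0 ?vnorm_ge0 //.
by rewrite ler_pdivrMl // mulrC.
Qed.

Lemma spec_bound_sq m n (A : 'M[R]_(m, n)) x :
  vnorm (A *m x) ^+ 2 <= specnorm A ^+ 2 * vnorm x ^+ 2.
Proof.
rewrite -exprMn; have := spec_bound A x; have := vnorm_ge0 (A *m x).
move=> ? ?; nra.
Qed.
End Norms.


Section Blocks.
Variables (R : realType) (N : nat) (d : nat -> nat).
Hypothesis Hmono : forall i j, (i <= j)%N -> (j <= N.+1)%N -> (d i <= d j)%N.

Lemma bex (r : nat) : (r < d N.+1)%N -> exists2 j, (j <= N.+1)%N & in_block d j r.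
Proof.
move=> rN.
suff : forall m, (m <= N.+1)%N -> (r < d m)%N -> exists2 j, (j <= m)%N & in_block d j r.
  by move=> /(_ N.+1 (leqnn _) rN) [j jm H]; exists j.
elim => [|m IH] mN rm; first by exists 0%N => //; rewrite /in_block /= rm.
case: (ltnP r (d m)) => rdm.
  by case: (IH (ltnW mN) rdm) => j jm H; exists j => //; exact: leqW.
by exists m.+1 => //; rewrite /in_block /= rdm.
Qed.

Lemma ble j k (r : nat) : (j <= N.+1)%N -> (k <= N.+1)%N -> in_block d j r ->
  (r < d k)%N -> (j <= k)%N.
Proof.
move=> jN kN; rewrite /in_block; case: j jN => [//|j] jN /andP [/= Hr _] rk.
rewrite leqNgt; apply/negP => kj.
have := Hmono (kj : (k <= j)%N) (ltnW jN); lia.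
Qed.

Lemma bgt j k (r : nat) : (j <= N.+1)%N -> (k <= N.+1)%N -> in_block d j r ->
  (d k <= r)%N -> (k < j)%N.
Proof.
move=> jN kN; rewrite /in_block => /andP [_ /= Hr] kr.
rewrite ltnNge; apply/negP => jk.
have := Hmono jk kN; lia.
Qed.

Lemma Lz (L : 'M[R]_(d N.+1)) (HL : block_lower_unit d N L) (r t : 'I_(d N.+1)) k :
  (k <= N.+1)%N -> (r < d k)%N -> (d k <= t)%N -> L r t = 0.
Proof.
move=> kN rk kt.
have [i iN bi] := bex (ltn_ord r); have [j jN bj] := bex (ltn_ord t).
have ik := ble iN kN bi rk; have kj := bgt jN kN bj kt.
have [H _] := HL i j r t iN jN bi bj; apply: H; exact: leq_ltn_trans kj.
Qed.

Lemma Uz (U : 'M[R]_(d N.+1)) (HU : block_upper d N U) (r t : 'I_(d N.+1)) k :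
  (k <= N.+1)%N -> (t < d k)%N -> (d k <= r)%N -> U r t = 0.
Proof.
move=> kN tk kr.
have [i iN bi] := bex (ltn_ord r); have [j jN bj] := bex (ltn_ord t).
have jk := ble jN kN bj tk; have ki := bgt iN kN bi kr.
apply: (HU i j r t iN jN bi bj); exact: leq_ltn_trans ki.
Qed.

Lemma lower_inj (L : 'M[R]_(d N.+1)) (HL : block_lower_unit d N L) k (z : 'cV[R]_(d N.+1)) :
  (k <= N.+1)%N -> (forall t : 'I_(d N.+1), (d k <= t)%N -> z t 0 = 0) ->
  (forall r : 'I_(d N.+1), (r < d k)%N -> (L *m z) r 0 = 0) -> z = 0.
Proof.
move=> kN Hz HLz.
suff H : forall j, (j <= k.+1)%N -> forall t : 'I_(d N.+1), (t < blk_start d j)%N -> z t 0 = 0.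
  apply/matrixP => t c; rewrite ord1 mxE; case: (ltnP t (d k)) => tk.
    exact: (H k.+1 (leqnn _)).
  exact: Hz.
elim => [|j IH] jk t //.
have jN : (j <= N.+1)%N by lia.
have IH' := IH (ltnW jk).
have Hblk : forall r : 'I_(d N.+1), in_block d j r -> z r 0 = 0.
  move=> r br.
  have rdk : (r < d k)%N.
    move: br; rewrite /in_block => /andP [_ /= ?].
    have := Hmono (jk : (j <= k)%N) kN; lia.
  rewrite -(HLz r rdk) mxE (bigD1 r) //= big1 ?addr0.
    have [_ H] := HL j j r r jN jN br br; by rewrite H // eqxx mul1r.
  move=> s sr; have [i iN bi] := bex (ltn_ord s).
  case: (ltngtP i j) => [ij|ji|eij].
  - rewrite IH' ?mulr0 //; move: bi; rewrite /in_block => /andP [_ si].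
    case: j ij jk jN br IH IH' => [//|j'] ij _ jN _ _ _ /=.
    have := Hmono (ij : (i <= j')%N) (ltnW jN); move: si; rewrite /=; lia.
  - by have [H _] := HL j i r s jN iN br bi; rewrite H ?mul0r.
  - subst i; have [_ H] := HL j j r s jN jN br bi.
    by rewrite H // eq_sym (negbTE sr) mul0r.
move=> tj; case: (ltnP t (blk_start d j)) => tb; first exact: IH'.
by apply: Hblk; rewrite /in_block tb.
Qed.
End Blocks.


Lemma sup_bound (R : realType) (S : set R) (K g : R) :
  (forall x, S x -> x <= K) -> g <= sup S -> 0 < g -> g <= K.
Proof.
move=> HK gs g0; case: (pselect (exists x, S x)) => [[x Sx]|HS]; last first.
  have S0 : S = set0 by apply/seteqP; split => x // Sx; apply: HS; exists x.
  by move: gs; rewrite S0 sup0 => ?; lra.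
apply: le_trans gs _; apply: ge_sup; first by exists x.
by move=> y /HK.
Qed.

Definition ext (R : realType) n (F : 'I_n -> R) (m : nat) : R :=
  match [pick t : 'I_n | val t == m] with Some t => F t | None => 0 end.

Lemma ext_ord (R : realType) n (F : 'I_n -> R) (t : 'I_n) : ext F t = F t.
Proof.
rewrite /ext; case: pickP => [t' /eqP /val_inj -> //|/(_ t)].
by rewrite eqxx.
Qed.

Lemma sum_window (R : realType) n (F : 'I_n -> R) lo hi :
  (lo <= hi)%N -> (hi <= n)%N ->
  \sum_(t < n) (if (lo <= t < hi)%N then F t else 0) = \sum_(lo <= m < hi) ext F m.
Proof.
move=> lh hn.
transitivity (\sum_(0 <= m < n) (if (lo <= m < hi)%N then ext F m else 0)).
  by rewrite big_mkord; apply: eq_bigr => t _; rewrite ext_ord.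
rewrite (big_cat_nat (n:=lo)) //; last exact: leq_trans lh hn.
rewrite /= [X in _ + X](big_cat_nat (n:=hi)) //=.
rewrite big1_seq ?add0r; last first.
  by move=> m /andP [_]; rewrite mem_index_iota => /andP [_ mlo]; rewrite leqNgt mlo.
rewrite [X in _ + X]big1_seq ?addr0; last first.
  by move=> m /andP [_]; rewrite mem_index_iota => /andP [hm _]; rewrite ltnNge hm andbF.
by rewrite big_nat_cond [RHS]big_nat_cond; apply: eq_bigr => m /andP [-> _].
Qed.

Lemma sum_shift (R : realType) (E : nat -> R) lo hi :
  \sum_(j < hi - lo) E (lo + j)%N = \sum_(lo <= m < hi) E m.
Proof.
transitivity (\sum_(0 + lo <= m < hi) E m); last by rewrite add0n.
rewrite big_addn big_mkord; apply: eq_bigr => j _; by rewrite addnC.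
Qed.

Lemma ext_sq (R : realType) n (F : 'I_n -> R) m : ext (fun t => F t ^+ 2) m = ext F m ^+ 2.
Proof. by rewrite /ext; case: pickP => // _; rewrite expr2 mulr0. Qed.

Lemma bcol_mul (R : realType) n (d : nat -> nat) (V : 'M[R]_n) (h : 'cV[R]_n) k :
  (blk_start d k <= blk_start d k.+1)%N -> (blk_start d k.+1 <= n)%N ->
  V *m \col_t (if (blk_start d k <= t < blk_start d k.+1)%N then h t 0 else 0)
  = block_col d V k *m
    \col_(j < blk_start d k.+1 - blk_start d k) ext (fun t => h t 0) (blk_start d k + j).
Proof.
move=> lh hn; apply/matrixP => r c; rewrite ord1 !mxE.
under eq_bigr do rewrite mxE.
rewrite (eq_bigr (fun t : 'I_n => if (blk_start d k <= t < blk_start d k.+1)%N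
                           then V r t * h t 0 else 0)); last first.
  by move=> t _; case: ifP; rewrite ?mulr0.
rewrite (sum_window (fun t => V r t * h t 0) lh hn).
under [RHS]eq_bigr do rewrite !mxE.
rewrite -sum_shift; apply: eq_bigr => j _; rewrite /ext; case: pickP => [t _|_] //.
by rewrite mul0r.
Qed.

Lemma telescope (R : realType) (d : nat -> nat) (e : nat -> R) K :
  (forall i j, (i <= j)%N -> (j <= K)%N -> (d i <= d j)%N) ->
  \sum_(k < K) \sum_(d k <= m < d k.+1) e m = \sum_(d 0 <= m < d K) e m.
Proof.
elim: K => [|K IH] Hm; first by rewrite big_ord0 big_geq.
rewrite big_ord_recr /= IH; last by move=> i j ij jK; apply: Hm => //; exact: leqW.
rewrite [RHS](big_cat_nat (n := d K)) //; apply: Hm => //; exact: leqnSn.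
Qed.


Unset Implicit Arguments. Set Strict Implicit. Set Printing Implicit Defensive.
Theorem mainTheorem4 (R : realType) (X Y : lmodType R)
  (ipX : X -> X -> R) (ipY : Y -> Y -> R)
  (HX : hilbert ipX) (HY : hilbert ipY)
  (a : X -> Y -> R)
  (Ha1 : forall (c : R) w1 w2 v, a (c *: w1 + w2) v = c * a w1 v + a w2 v)
  (Ha2 : forall (c : R) w v1 v2, a w (c *: v1 + v2) = c * a w v1 + a w v2)
  (Ca : R)
  (Hbd : forall w v, `|a w v| <= Ca * ipnorm ipX w * ipnorm ipY v)
  (f : Y -> R)
  (Hflin : forall (c : R) v1 v2, f (c *: v1 + v2) = c * f v1 + f v2)
  (Hfbd : exists Cf : R, forall v, `|f v| <= Cf * ipnorm ipY v)
  (u : X) (Hu : forall v, a u v = f v)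
  (l N : nat) (Xs : nat -> set X) (Ys : nat -> set Y) (d : nat -> nat)
  (HXdim : forall k, (k <= N.+1)%N -> has_dim (Xs (l + k)%N) (d k))
  (HYdim : forall k, (k <= N.+1)%N -> has_dim (Ys (l + k)%N) (d k))
  (HXnest : forall k, (k <= N)%N -> Xs (l + k)%N `<=` Xs (l + k.+1)%N)
  (HYnest : forall k, (k <= N)%N -> Ys (l + k)%N `<=` Ys (l + k.+1)%N)
  (gamma : R) (Hgamma : 0 < gamma)
  (Hinfsup : forall k, (k <= N.+1)%N ->
      infsup_ge ipX ipY a (Xs (l + k)%N) (Ys (l + k)%N) gamma)
  (us : nat -> X)
  (Hus : forall k, (k <= N.+1)%N ->
      Xs (l + k)%N (us (l + k)%N) /\
      forall v, Ys (l + k)%N v -> a (us (l + k)%N) v = f v)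
  (wX : 'I_(d N.+1) -> X) (wY : 'I_(d N.+1) -> Y)
  (HwX : nested_onb ipX Xs l N d wX) (HwY : nested_onb ipY Ys l N d wY)
  (L U : 'M[R]_(d N.+1))
  (HL : block_lower_unit d N L) (HU : block_upper d N U)
  (HLU : galerkin_matrix a wX wY = L *m U) :
  \sum_(l <= k < l + N.+1) ipnorm ipX (us k.+1 - us k) ^+ 2
    <= Ca ^+ 2 / gamma ^+ 2 * specnorm U ^+ 2
       * (\big[Num.max/0]_(1 <= k < N.+2) specnorm (block_col d (invmx U) k) ^+ 2)
       * ipnorm ipX (u - us l) ^+ 2.
Proof.
have HipX := HX.1; have HipY := HY.1.
have Hmono := dmono HXdim HXnest.
set n := d N.+1.
pose cX k : 'cV[R]_n := \col_r (if (r < d k)%N then ipX (us (l + k)%N) (wX r) else 0).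
have uE : forall k, (k <= N.+1)%N -> us (l + k)%N = \sum_r cX k r 0 *: wX r.
  move=> k kN; rewrite {1}(span_rep HipX HXdim HXnest HwX kN (Hus k kN).1).
  by apply: eq_bigr => r _; rewrite mxE.
have diffE : forall i j, (i <= N.+1)%N -> (j <= N.+1)%N ->
    ipnorm ipX (us (l + i)%N - us (l + j)%N) ^+ 2 = vnorm (cX i - cX j) ^+ 2.
  move=> i j iN jN; rewrite ipnorm_sq // vnorm_sq (uE i iN) (uE j jN) -sumrB.
  under eq_bigr do rewrite -scalerBl.
  rewrite (sqnormE HipX HXdim HXnest HwX); apply: eq_bigr => r _; by rewrite !mxE.
pose M := galerkin_matrix a wX wY.
pose b : 'cV[R]_n := \col_r f (wY r).
have a1sum : forall v (c : 'I_n -> R) (w : 'I_n -> X),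
    a (\sum_t c t *: w t) v = \sum_t c t * a (w t) v.
  move=> v c w; exact: (lin_sum (h := fun x => a x v) (fun c x y => Ha1 c x y v)).
have a2sum : forall x (c : 'I_n -> R) (w : 'I_n -> Y),
    a x (\sum_t c t *: w t) = \sum_t c t * a x (w t).
  move=> x c w; exact: (lin_sum (h := fun y => a x y) (fun c y z => Ha2 c x y z)).
have Mc : forall c : 'cV[R]_n, forall r, (M *m c) r 0 = a (\sum_t c t 0 *: wX t) (wY r).
  move=> c r; rewrite a1sum mxE; apply: eq_bigr => t _; by rewrite mxE mulrC.
have Hgal : forall k, (k <= N.+1)%N -> forall r : 'I_n, (r < d k)%N -> (M *m cX k) r 0 = b r 0.
  move=> k kN r rk; rewrite Mc -uE // mxE; apply: (Hus k kN).2.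
  exact: (w_in_k HYdim HYnest HwY kN rk).
have Minj : forall c : 'cV[R]_n, M *m c = 0 -> c = 0.
  move=> c Hc.
  set W := \sum_t c t 0 *: wX t.
  have HW : Xs (l + N.+1)%N W.
    apply: sub_sum; first exact: (subk HXdim (leqnn _)).
    move=> t; right; exact: (w_in_k HXdim HXnest HwX (leqnn _) (ltn_ord t)).
  have HaW : forall v, Ys (l + N.+1)%N v -> a W v = 0.
    move=> v Hv; rewrite (span_rep HipY HYdim HYnest HwY (leqnn _) Hv) a2sum big1 // => r _.
    by rewrite -Mc Hc mxE mulr0.
  have W0 : W = 0.
    apply/eqP; apply/negPn/negP => nW.
    have := sup_bound _ (Hinfsup N.+1 (leqnn _) W HW nW) Hgamma.
    have H : forall x, [set a W v / (ipnorm ipX W * ipnorm ipY v) | v in [set v | Ys (l + N.+1)%N v /\ v != 0]] x -> x <= 0.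
      by move=> _ [v [Hv _] <-]; rewrite HaW // mul0r.
    move/(_ 0 H); lra.
  apply/matrixP => t j; rewrite ord1 mxE.
  have := coef_rep HipX HXdim HXnest HwX (fun t => c t 0) t.
  by rewrite -/W W0 (lin0 (ipl HipX (wX t))).
have Munit : M \in unitmx.
  rewrite -unitmx_tr -row_free_unit; apply: inj_row_free => v Hv.
  have : (M *m v^T)^T = 0 by rewrite trmx_mul trmxK.
  move/(congr1 trmx); rewrite trmxK trmx0 => /Minj /(congr1 trmx).
  by rewrite trmxK trmx0.
have : (L *m U) \in unitmx by rewrite -HLU.
rewrite unitmx_mul => /andP [Lu Uu].
pose g := invmx L *m b.
pose Pg k : 'cV[R]_n := \col_r (if (r < d k)%N then g r 0 else 0).
have HUc : forall k, (k <= N.+1)%N -> U *m cX k = Pg k.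
  move=> k kN; apply/eqP; rewrite -subr_eq0; apply/eqP.
  apply: (lower_inj Hmono HL kN).
    move=> t kt; rewrite !mxE.
    have -> : (t < d k)%N = false by rewrite ltnNge kt.
    rewrite subr0 big1 // => s _; rewrite mxE; case: ifP => sk; last by rewrite mulr0.
    by rewrite (Uz Hmono HU kN sk kt) mul0r.
  move=> r rk; rewrite mulmxBr mulmxA -HLU -/M [LHS]mxE [X in _ + X]mxE Hgal //.
  suff -> : (L *m Pg k) r 0 = b r 0 by rewrite subrr.
  rewrite -[b](mulKVmx Lu) -/g mxE [RHS]mxE; apply: eq_bigr => t _; rewrite mxE.
  case: ifP => // tk; rewrite (Lz Hmono HL kN rk) ?mul0r //; by rewrite leqNgt tk.
have cE : forall k, (k <= N.+1)%N -> cX k = invmx U *m Pg k.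
  by move=> k kN; rewrite -HUc // mulKmx.
(* Galerkin quasi-optimality *)
set En := ipnorm ipX (u - us l).
set Wn := ipnorm ipX (us (l + N.+1)%N - us l).
have gal : Wn ^+ 2 <= Ca ^+ 2 / gamma ^+ 2 * En ^+ 2.
  have HW : Xs (l + N.+1)%N (us (l + N.+1)%N - us l).
    apply: (subB (subk HXdim (leqnn _))); first exact: (Hus N.+1 (leqnn _)).1.
    have := (Hus 0%N isT).1; rewrite addn0 => H0.
    by apply: (nest_le HXnest (leq0n N.+1) (leqnn _)); rewrite addn0.
  have HaW : forall v, Ys (l + N.+1)%N v ->
      a (us (l + N.+1)%N - us l) v = a (u - us l) v.
    move=> v Hv; rewrite !(linB (fun c x y => Ha1 c x y v)) Hu.
    by rewrite (Hus N.+1 (leqnn _)).2.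
  have En0 : 0 <= En by exact: ipnorm_ge0.
  have [W0|nW] := eqVneq (us (l + N.+1)%N - us l) 0.
    rewrite /Wn W0 ipnorm0 // expr0n /=.
    by apply: mulr_ge0; [apply: divr_ge0; exact: sqr_ge0 | exact: sqr_ge0].
  have Wp : 0 < Wn by exact: ipnorm_gt0.
  have := sup_bound (K := Ca * En / Wn) _ (Hinfsup N.+1 (leqnn _) _ HW nW) Hgamma.
  have H : forall x, [set a (us (l + N.+1)%N - us l) v /
        (ipnorm ipX (us (l + N.+1)%N - us l) * ipnorm ipY v) | v in
        [set v | Ys (l + N.+1)%N v /\ v != 0]] x -> x <= Ca * En / Wn.
    move=> _ [v [Hv nv] <-]; rewrite -/Wn.
    have vp : 0 < ipnorm ipY v by exact: ipnorm_gt0.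
    rewrite ler_pdivrMr ?mulr_gt0 // HaW //.
    have -> : Ca * En / Wn * (Wn * ipnorm ipY v) = Ca * En * ipnorm ipY v.
      by field; rewrite lt0r_neq0.
    exact: le_trans (ler_norm _) (Hbd _ _).
  move/(_ H); rewrite ler_pdivlMr // => gW.
  have gW0 : 0 <= gamma * Wn by rewrite mulr_ge0 // ltW.
  have gp2 : 0 < gamma ^+ 2 by rewrite exprn_gt0.
  rewrite mulrAC ler_pdivlMr //.
  have : (gamma * Wn) ^+ 2 <= (Ca * En) ^+ 2 by nra.
  by rewrite !exprMn mulrC.
have -> : \sum_(l <= k < l + N.+1) ipnorm ipX (us k.+1 - us k) ^+ 2
    = \sum_(k < N.+1) ipnorm ipX (us (l + k.+1)%N - us (l + k)%N) ^+ 2.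
  transitivity (\sum_(0 + l <= k < l + N.+1) ipnorm ipX (us k.+1 - us k) ^+ 2).
    by rewrite add0n.
  rewrite big_addn addKn big_mkord; apply: eq_bigr => k _; by rewrite addnS addnC.
set gv := fun t : 'I_n => g t 0.
pose gq k : 'cV[R]_(blk_start d k.+2 - blk_start d k.+1) :=
  \col_(j < blk_start d k.+2 - blk_start d k.+1) ext gv (blk_start d k.+1 + j).
pose Mx := \big[Num.max/0]_(1 <= k < N.+2) specnorm (block_col d (invmx U) k) ^+ 2.
have term : forall k : 'I_N.+1,
    ipnorm ipX (us (l + k.+1)%N - us (l + k)%N) ^+ 2
    = vnorm (block_col d (invmx U) k.+1 *m gq k) ^+ 2.
  move=> k; have kN : (k <= N.+1)%N by apply: ltnW.
  rewrite diffE // !cE // -mulmxBr.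
  have -> : Pg k.+1 - Pg k =
      \col_t (if (blk_start d k.+1 <= t < blk_start d k.+2)%N then g t 0 else 0).
    apply/matrixP => t c; rewrite !mxE /=.
    case: (ltnP t (d k)) => tk /=.
      have H := Hmono k k.+1 (leqnSn k) (ltn_ord k).
      by rewrite (leq_trans tk H) subrr.
    by rewrite subr0.
  rewrite bcol_mul //; apply: Hmono => //; exact: leqnSn.
have Mxb : forall k : 'I_N.+1, specnorm (block_col d (invmx U) k.+1) ^+ 2 <= Mx.
  move=> k; rewrite /Mx; apply: (le_bigmax_seq _ k.+1) => //.
  by rewrite mem_index_iota /= ltnS ltn_ord.
have Mx0 : 0 <= Mx by exact: le_trans (sqr_ge0 _) (Mxb ord0).
have vq : forall k : 'I_N.+1, vnorm (gq k) ^+ 2 = \sum_(d k <= m < d k.+1) ext gv m ^+ 2.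
  move=> k; rewrite vnorm_sq; under eq_bigr do rewrite mxE.
  exact: (sum_shift (fun m => ext gv m ^+ 2)).
have tail : \sum_(d 0 <= m < n) ext gv m ^+ 2 <= specnorm U ^+ 2 * Wn ^+ 2.
  have -> : \sum_(d 0 <= m < n) ext gv m ^+ 2 = vnorm (Pg N.+1 - Pg 0) ^+ 2.
    under eq_bigr do rewrite -ext_sq.
    rewrite vnorm_sq -(sum_window (fun t => gv t ^+ 2) (Hmono 0 N.+1 isT (leqnn _)) (leqnn n)).
    apply: eq_bigr => t _; rewrite !mxE ltn_ord.
    case: (ltnP t (d 0)) => tk; rewrite ?andbT.
      by rewrite subrr expr2 mulr0.
    by rewrite subr0 /gv mxE.
  rewrite -!HUc // -mulmxBr; apply: le_trans (spec_bound_sq _ _) _.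
  by rewrite -diffE // addn0.
apply: le_trans (_ : Mx * (specnorm U ^+ 2 * Wn ^+ 2) <= _); last first.
  apply: le_trans (_ : Mx * (specnorm U ^+ 2 * (Ca ^+ 2 / gamma ^+ 2 * En ^+ 2)) <= _).
    by apply: ler_wpM2l => //; apply: ler_wpM2l => //; exact: sqr_ge0.
  by rewrite -/Mx le_eqVlt; apply/orP; left; apply/eqP; ring.
apply: le_trans (_ : \sum_(k < N.+1) Mx * vnorm (gq k) ^+ 2 <= _).
  apply: ler_sum => k _; rewrite term.
  apply: le_trans (spec_bound_sq _ _) _; apply: ler_wpM2r; [exact: sqr_ge0 | exact: Mxb].
rewrite -mulr_sumr; apply: ler_wpM2l => //.
under eq_bigr do rewrite vq.
rewrite (telescope (fun m => ext gv m ^+ 2) (K := N.+1)); first exact: tail.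
by move=> i j ij jN; exact: Hmono.
Qed.
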